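(* Let $\mathcal{T}$ be a trim transducer with a single initial state. Then the (possibly infinite) multi-transducer $\bar{\mathcal{W}}(\mathcal{T})$ is separable, i.e. it has a single initial state and any two distinct transitions of $\bar{\mathcal{W}}(\mathcal{T})$ with the same source and the same input letter are transient (there is no run in $\bar{\mathcal{W}}(\mathcal{T})$ from the target of either of them back to their common source).
   Context: $\mathcal{T}=(Q,E,I,F,f)$ is a transducer: finite state set $Q$, initial states $I$, final states $F$, transitions $E\subseteq Q\times\Sigma\times\Gamma^*\times Q$, final output $f:F\to\Gamma^*$; trim means every state lies on a run from an initial to a final state. A multi-transducer is like a transducer except that the final output function maps final states to finite sets of words. Determinisation $\bar{\mathcal{D}}(\mathcal{T})$: its states are the finite subsets $U$ of $Q\times\Gamma^*$. For such $U$ and $\sigma\in\Sigma$, let $R_{U,\sigma}=\{(q,uv) : (p,u)\in U,\ (p,\sigma,v,q)\in E\}$, let $w_{U,\sigma}$ be the longest common prefix of the words $\{w : (q,w)\in R_{U,\sigma}\text{ for some }q\}$ (taken to be $\epsilon$ if this set is empty), and $P_{U,\sigma}=\{(q,w) : (q,w_{U,\sigma}w)\in R_{U,\sigma}\}$. The transitions of $\bar{\mathcal{D}}(\mathcal{T})$ are $(U,\sigma,w_{U,\sigma},P_{U,\sigma})$ for all $U,\sigma$; the initial state is $U_0=I\times\{\epsilon\}$; final states are the $U$ with $U\cap(F\times\Gamma^* )\neq\emptyset$, with final output set $\{wf(q) : q\in F,\ (q,w)\in U\}$. Rank: for a finite $U\subseteq Q\times\Gamma^*$, $n_U$ is the set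 of strongly connected components of $\mathcal{T}$ reachable (in $\mathcal{T}$) from the states $q$ such that $(q,w)\in U$ for some $w$. $\bar{\mathcal{W}}(\mathcal{T})$ is obtained from $\bar{\mathcal{D}}(\mathcal{T})$ as follows: every transition $(U,\sigma,v,U')$ of $\bar{\mathcal{D}}(\mathcal{T})$ with $n_{U'}\subsetneq n_U$ is removed and replaced by the transitions $(U,\sigma,vw,\{(q,\epsilon)\})$ for all $(q,w)\in U'$; other transitions, the initial state, final states and final outputs are unchanged. A transition is transient if there is no run from its target to its source. *)

(* Defs.v *)
From mathcomp Require Import all_boot.
From mathcomp Require Import finmap.

Set Implicit Arguments.
Unset Strict Implicit.
Unset Printing Implicit Defensive.

Local Open Scope fset_scope.

Section Transducers.
Variables (Sigma Gamma : finType).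

Record transducer (Q : finType) := Transducer {
  trans : {fset (Q * Sigma * seq Gamma * Q)};
  init  : {set Q};
  final : {set Q};
  fout  : Q -> seq Gamma   (* final output function; only relevant on final *)
}.

Definition tsrc {Q : finType} (t : Q * Sigma * seq Gamma * Q) : Q := t.1.1.1.
Definition tlet {Q : finType} (t : Q * Sigma * seq Gamma * Q) : Sigma := t.1.1.2.
Definition tout {Q : finType} (t : Q * Sigma * seq Gamma * Q) : seq Gamma := t.1.2.
Definition ttgt {Q : finType} (t : Q * Sigma * seq Gamma * Q) : Q := t.2.

Definition tedge {Q : finType} (T : transducer Q) : rel Q :=
  fun p q => has (fun t => (tsrc t == p) && (ttgt t == q)) (enum_fset (trans T)).

Definition treach {Q : finType} (T : transducer Q) : rel Q := connect (tedge T).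

Definition trim {Q : finType} (T : transducer Q) : Prop :=
  forall q : Q, exists i, exists f,
    [/\ i \in init T, f \in final T, treach T i q & treach T q f].

Fixpoint lcp2 (u v : seq Gamma) : seq Gamma :=
  match u, v with
  | x :: u', y :: v' => if x == y then x :: lcp2 u' v' else [::]
  | _, _ => [::]
  end.

Definition lcp (ws : seq (seq Gamma)) : seq Gamma :=
  match ws with
  | [::] => [::]
  | w :: ws' => foldl lcp2 w ws'
  end.

Section Det.
Variables (Q : finType) (T : transducer Q).

Definition dstate := {fset (Q * seq Gamma)}.

Definition Rset (U : dstate) (a : Sigma) : dstate :=
  seq_fset tt [seq (ttgt t, x.2 ++ tout t)
              | x <- enum_fset U,
                t <- [seq t <- enum_fset (trans T) | (tsrc t == x.1) && (tlet t == a)]].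

Definition wout (U : dstate) (a : Sigma) : seq Gamma :=
  lcp [seq x.2 | x <- enum_fset (Rset U a)].

Definition Pset (U : dstate) (a : Sigma) : dstate :=
  seq_fset tt [seq (x.1, drop (size (wout U a)) x.2)
              | x <- enum_fset (Rset U a) & prefix (wout U a) x.2].

Definition Dtrans (U : dstate) (a : Sigma) (v : seq Gamma) (U' : dstate) : Prop :=
  v = wout U a /\ U' = Pset U a.

Definition U0 : dstate := seq_fset tt [seq (q, [::]) | q <- enum (init T)].

Definition Dfinal (U : dstate) (w : seq Gamma) : Prop :=
  exists q, exists u, [/\ q \in final T, (q, u) \in U & w = u ++ fout T q].

Definition scc (q : Q) : {set Q} := [set q' | treach T q q' && treach T q' q].

Definition rank (U : dstate) : {set {set Q}} :=
  [set scc q' | q' in [set q' : Q | has (fun x => treach T x.1 q') (enum_fset U)]].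

Definition Wtrans (U : dstate) (a : Sigma) (v : seq Gamma) (U' : dstate) : Prop :=
  exists v0, exists P, Dtrans U a v0 P /\
    (if rank P \proper rank U
     then exists q, exists w, [/\ (q, w) \in P, v = v0 ++ w & U' = [fset (q, [::])]]
     else v = v0 /\ U' = P).

Definition Winit (U : dstate) : Prop := U = U0.

End Det.

Record multi_transducer := MultiTransducer {
  mstate : Type;
  minit  : mstate -> Prop;
  mtrans : mstate -> Sigma -> seq Gamma -> mstate -> Prop;
  mfinal : mstate -> seq Gamma -> Prop
}.

Inductive mreach (M : multi_transducer) : mstate M -> mstate M -> Prop :=
  | mreach_refl s : mreach s s
  | mreach_step s a v s1 s' : mtrans s a v s1 -> mreach s1 s' -> mreach s s'.

Definition transient (M : multi_transducer) (s : mstate M) (s' : mstate M) : Prop :=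
  ~ mreach s' s.

Definition separable (M : multi_transducer) : Prop :=
  (exists s0 : mstate M, forall s : mstate M, minit s <-> s = s0) /\
  forall (s : mstate M) a v1 (s1 : mstate M) v2 (s2 : mstate M),
    mtrans s a v1 s1 -> mtrans s a v2 s2 -> (v1, s1) <> (v2, s2) ->
    transient s s1 /\ transient s s2.

Definition Wbar (Q : finType) (T : transducer Q) : multi_transducer :=
  @MultiTransducer (dstate Q) (@Winit Q T) (@Wtrans Q T) (@Dfinal Q T).

End Transducers.

(* Main.v *)
Require Import Defs.
From mathcomp Require Import all_boot.
From mathcomp Require Import finmap.

Local Open Scope fset_scope.

Section Aux.
Variables (Sigma Gamma Q : finType) (T : transducer Sigma Gamma Q).

Lemma rank_sub (U U' : dstate Gamma Q) :
  (forall y, y \in U' -> exists2 x, x \in U & treach T x.1 y.1) ->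
  rank T U' \subset rank T U.
Proof.
move=> H; apply/subsetP => C /imsetP [q' Hq' ->].
rewrite inE in Hq'; move/hasP: Hq' => [y Hy Hr].
have [x Hx Hxy] := H y Hy.
apply/imsetP; exists q' => //.
rewrite inE; apply/hasP; exists x => //.
exact: connect_trans Hxy Hr.
Qed.

Lemma Pset_reach (U : dstate Gamma Q) a y :
  y \in Pset T U a -> exists2 x, x \in U & treach T x.1 y.1.
Proof.
rewrite /Pset seq_fsetE => /mapP [z]; rewrite mem_filter => /andP [_ Hz] ->.
move: Hz; rewrite /Rset seq_fsetE => /allpairsPdep [x [t [Hx Ht ->]]].
move: Ht; rewrite mem_filter => /andP [/andP [/eqP Hs _] Ht].
exists x => //; apply: connect1; apply/hasP; exists t => //.
by rewrite Hs !eqxx.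
Qed.

Lemma Wtrans_rank (U : dstate Gamma Q) a v U' :
  Wtrans T U a v U' -> rank T U' \subset rank T U.
Proof.
move=> [v0 [P [[_ ->]]]].
have HP : rank T (Pset T U a) \subset rank T U by apply: rank_sub; exact: Pset_reach.
case: ifP => Hpr.
- move=> [q [w [Hqw _ ->]]]; apply: subset_trans HP.
  apply: rank_sub => y; rewrite inE => /eqP ->.
  by exists (q, w) => //=; apply: connect0.
- by move=> [_ ->].
Qed.

Lemma mreach_rank (s s' : dstate Gamma Q) :
  @mreach _ _ (Wbar T) s s' -> rank T s' \subset rank T s.
Proof.
elim => [x|x a v s1 x' Ht _ IH]; first exact: subxx.
have H2 : rank T s1 \subset rank T x := @Wtrans_rank x a v s1 Ht.
exact: (subset_trans IH H2).
Qed.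

End Aux.

Theorem lemma6 (Sigma Gamma Q : finType) (T : transducer Sigma Gamma Q) :
  trim T -> (exists i0 : Q, init T = [set i0]) ->
  separable (Wbar T).
Proof.
move=> _ _; split; first by exists (U0 T) => s.
move=> s a v1 s1 v2 s2 [v0 [P [[E1 E2] H1]]] [v0' [P' [[E3 E4] H2]]] Hne.
subst v0 P v0' P'.
case: ifP H1 H2 => Hpr H1 H2; last first.
  case: H1 H2 => E1 E2 [E3 E4]; exfalso; by apply: Hne; rewrite E1 E2 E3 E4.
have key : forall q w, (q, w) \in Pset T s a ->
    ~ @mreach _ _ (Wbar T) ([fset (q, [::])] : dstate Gamma Q) s.
  move=> q w Hqw Hr.
  have Hs : rank T ([fset (q, [::])] : dstate Gamma Q) \subset rank T (Pset T s a).
    apply: rank_sub => y; rewrite inE => /eqP ->.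
    by exists (q, w) => //=; apply: connect0.
  have := proper_sub_trans (sub_proper_trans Hs Hpr) (@mreach_rank _ _ _ T _ _ Hr).
  by rewrite properE subxx.
case: H1 => q1 [w1 [Hq1 _ ->]]; case: H2 => q2 [w2 [Hq2 _ ->]].
split; [exact: key Hq1 | exact: key Hq2].
Qed.
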